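(* Let $G$ be a bridgeless cubic graph with at least one $2$-edge-cut and let $(T,\varphi)$ be a cactus representation of all $2$-edge-cuts of $G$ (as described in the context). Let $\{e_1,e_2\}$ be a $2$-edge-cut of $G$ and let $\{a,b\}$ be the corresponding $2$-edge-cut of $T$. Perform the $\{e_1,e_2\}$-reduction in $G$, obtaining graphs $G_1$ and $G_2$ with new edges $e_1'\in E(G_1)$ and $e_2'\in E(G_2)$. Perform the $\{a,b\}$-reduction in $T$, obtaining graphs $T_1$ and $T_2$ (with $T_i$ the part corresponding to $G_i$), and delete any loop thereby created in $T_1$ or $T_2$. Then $(T_1,\varphi|_{V(G_1)})$ and $(T_2,\varphi|_{V(G_2)})$ are cactus representations of all $2$-edge-cuts of $G_1$ and $G_2$, respectively.
   Context: Graphs may have parallel edges; cubic means every vertex has degree $3$; bridgeless means no edge whose removal disconnects more components. A $2$-edge-cut is an inclusion-minimal edge cut of size $2$; in a bridgeless graph with a $2$-edge-cut the minimum edge cuts are exactly the $2$-edge-cuts. A cactus is a connected graph in which each edge lies on at most one cycle ($2$-cycles allowed, no loops). For a connected graph $G$, a cactus representation is a pair $(T,\varphi)$ with $T$ a cactus and $\varphi:V(G)\to V(T)$ such that (1) for every minimum cut $\{S,V(T)\setminus S\}$ of $T$, the partition $X=\{u:\varphi(u)\in S\}$, $V(G)\setminus X$ is a minimum cut of $G$, and (2) every minimum cut $\{X,V(G)\setminus X\}$ of $G$ arises in this way from some minimum cut of $T$. The cactus representation of all $2$-edge-cuts used here is the one obtained by contracting each $3$-edge-connected component of $G$ (a maximal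 vertex set $X$ with at least $3$ edge-disjoint paths... i.e. local edge-connectivity $\lambda(u,v)\ge 3$ for all $u,v\in X$) to a single node: $\varphi$ maps each vertex to the node of its $3$-edge-connected component, each edge $uv$ of $G$ with $\varphi(u)\neq\varphi(v)$ (an external edge) corresponds to an edge of $T$ joining $\varphi(u)$ and $\varphi(v)$, and two distinct external edges form a $2$-edge-cut of $G$ if and only if their corresponding edges of $T$ lie on a common cycle of $T$; the $2$-edge-cut $\{a,b\}$ of $T$ corresponding to $\{e_1,e_2\}$ consists of the edges corresponding to $e_1,e_2$. For a $2$-edge-cut $\{f_1,f_2\}$ of a graph $H$, $f_1=x_1y_1$, $f_2=x_2y_2$ with $x_1,x_2$ in one component $A$ of $H-\{f_1,f_2\}$ and $y_1,y_2$ in the other component $B$, the $\{f_1,f_2\}$-reduction replaces $f_1,f_2$ by new edges $x_1x_2$ (in $A$) and $y_1y_2$ (in $B$), giving the two graphs $A+x_1x_2$ and $B+y_1y_2$ (the new edge may be a loop in the cactus case when $x_1=x_2$ or $y_1=y_2$). *)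

(* Defs.v *)
From HB Require Import structures.
From mathcomp Require Import all_boot.
Set Implicit Arguments. Unset Strict Implicit. Unset Printing Implicit Defensive.

(* A finite multigraph: vertices, edges, and the (ordered, but used as
   unordered) pair of endpoints of each edge. A loop has equal endpoints. *)
Record mgraph := MGraph {
  vert : finType;
  edge : finType;
  endpts : edge -> vert * vert }.

Definition adj (g : mgraph) (F : {set edge g}) : rel (vert g) :=
  fun u v => [exists e, (e \notin F) &&
                ((endpts e == (u, v)) || (endpts e == (v, u)))].

Definition connected (g : mgraph) : Prop :=
  forall u v : vert g, connect (adj set0) u v.

Definition bridgeless (g : mgraph) : Prop :=
  forall (e : edge g) (u v : vert g),
    connect (adj set0) u v -> connect (adj [set e]) u v.

(* degree, a loop counting twice *)
Definition degC (g : mgraph) (C : {set edge g}) (v : vert g) : nat :=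
  #|[set e in C | (endpts e).1 == v]| + #|[set e in C | (endpts e).2 == v]|.

Definition deg (g : mgraph) (v : vert g) : nat := degC [set: edge g] v.

Definition cubic (g : mgraph) : Prop := forall v : vert g, deg v = 3.

Definition crossing (g : mgraph) (X : {set vert g}) : {set edge g} :=
  [set e | ((endpts e).1 \in X) != ((endpts e).2 \in X)].

Definition edge_cut (g : mgraph) (F : {set edge g}) : Prop :=
  exists X : {set vert g}, [/\ X != set0, X != setT & F = crossing X].

Definition two_edge_cut (g : mgraph) (F : {set edge g}) : Prop :=
  [/\ edge_cut F, #|F| = 2 &
      forall F' : {set edge g}, F' \proper F -> ~ edge_cut F'].

Definition lambda_ge (g : mgraph) (k : nat) (u v : vert g) : Prop :=
  forall X : {set vert g}, u \in X -> v \notin X -> k <= #|crossing X|.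

(* C is (the edge set of) a cycle: a nonempty connected 2-regular subgraph;
   loops (1-cycles) and 2-cycles of parallel edges are included *)
Definition is_cycle (g : mgraph) (C : {set edge g}) : Prop :=
  [/\ C != set0,
      forall v : vert g, degC C v = 0 \/ degC C v = 2 &
      forall u v : vert g, 0 < degC C u -> 0 < degC C v ->
        connect (adj (~: C)) u v].

Definition cactus (g : mgraph) : Prop :=
  [/\ connected g,
      forall e : edge g, (endpts e).1 != (endpts e).2 &
      forall (e : edge g) (C1 C2 : {set edge g}),
        is_cycle C1 -> is_cycle C2 -> e \in C1 -> e \in C2 -> C1 = C2].

Definition cactus_rep2 (g T : mgraph) (phi : vert g -> vert T) : Prop :=
  cactus T /\
  (forall S : {set vert T}, S != set0 -> S != setT -> #|crossing S| = 2 ->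
     let X := [set u | phi u \in S] in
     [/\ X != set0, X != setT & #|crossing X| = 2]) /\
  (forall X : {set vert g}, X != set0 -> X != setT -> #|crossing X| = 2 ->
     exists S : {set vert T}, [/\ S != set0, S != setT, #|crossing S| = 2 &
        X = [set u | phi u \in S]]).

(* Reduction: the component of r in g - F, plus a new edge r s;
   if dl is true, the new edge is deleted when it is a loop (r = s). *)
Definition rcomp (g : mgraph) (F : {set edge g}) (r : vert g) : {set vert g} :=
  [set v | connect (adj F) r v].

Lemma r_in_rcomp (g : mgraph) (F : {set edge g}) (r : vert g) : r \in rcomp F r.
Proof. by rewrite inE connect0. Qed.

Definition rvert (g : mgraph) (F : {set edge g}) (r : vert g) : finType :=
  {v : vert g | v \in rcomp F r}.

Definition rbase (g : mgraph) (F : {set edge g}) (r : vert g) : rvert F r :=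
  exist _ r (r_in_rcomp F r).

Definition old_edge (g : mgraph) (F : {set edge g}) (r : vert g) : finType :=
  {e : edge g | [&& e \notin F, (endpts e).1 \in rcomp F r
                            & (endpts e).2 \in rcomp F r]}.

Definition redge (g : mgraph) (F : {set edge g}) (r s : vert g) (dl : bool)
  : finType :=
  {o : option (old_edge F r) | ~~ [&& dl, o == None & r == s]}.

Definition rends (g : mgraph) (F : {set edge g}) (r s : vert g) (dl : bool)
  (o : redge F r s dl) : rvert F r * rvert F r :=
  match val o with
  | Some e => (insubd (rbase F r) (endpts (val e)).1,
               insubd (rbase F r) (endpts (val e)).2)
  | None => (rbase F r, insubd (rbase F r) s)
  end.

Definition reduce (g : mgraph) (F : {set edge g}) (r s : vert g) (dl : bool)
  : mgraph := @MGraph (rvert F r) (redge F r s dl) (@rends g F r s dl).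

(* Main.v *)
Require Import Defs.
From HB Require Import structures.
From mathcomp Require Import all_boot.
From mathcomp Require Import zify.
Set Implicit Arguments. Unset Strict Implicit. Unset Printing Implicit Defensive.

Lemma adjC (g : mgraph) (F : {set edge g}) u v : adj F u v = adj F v u.
Proof. by apply/existsP/existsP => -[e He]; exists e; rewrite orbC. Qed.

Lemma connectC (g : mgraph) (F : {set edge g}) u v :
  connect (adj F) u v = connect (adj F) v u.
Proof. apply: sym_connect_sym => x y; exact: adjC. Qed.

Lemma cutP (g : mgraph) (F : {set edge g}) u v :
  reflect (forall Y : {set vert g}, u \in Y -> crossing Y \subset F -> v \in Y)
          (connect (adj F) u v).
Proof.
apply: (iffP idP).
- move=> /connectP [p pth ->] Y uY cY.
  elim: p u pth uY => [|w p IH] u /=; first done.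
  case/andP => huw pth uY; apply: IH pth _.
  apply/negPn/negP => wY.
  move: huw => /existsP [e /andP [eF he]].
  have : e \in crossing Y.
    by rewrite inE; case/orP: he => /eqP -> /=; rewrite uY (negbTE wY).
  by move/(subsetP cY); rewrite (negbTE eF).
- move=> H; have := H (rcomp F u); rewrite !inE; apply; first exact: connect0.
  apply/subsetP => e; rewrite inE; apply: contraR => eF.
  have hadj : adj F (endpts e).1 (endpts e).2.
    by apply/existsP; exists e; rewrite eF -surjective_pairing eqxx.
  rewrite !inE; apply/eqP; apply/idP/idP => h.
    exact: connect_trans h (connect1 hadj).
  by apply: connect_trans h (connect1 _); rewrite adjC.
Qed.

Lemma crossing_rcomp (g : mgraph) (F : {set edge g}) r :
  crossing (rcomp F r) \subset F.
Proof.
apply/subsetP => e; rewrite inE; apply: contraR => eF.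
have hadj : adj F (endpts e).1 (endpts e).2.
  by apply/existsP; exists e; rewrite eF -surjective_pairing eqxx.
rewrite !inE; apply/eqP; apply/idP/idP => h.
  exact: connect_trans h (connect1 hadj).
by apply: connect_trans h (connect1 _); rewrite adjC.
Qed.

Lemma card_sum (T : finType) (C : {set T}) (P : pred T) :
  #|[set e in C | P e]| = \sum_(e in C) (P e : nat).
Proof.
rewrite -sum1_card big_mkcond [RHS]big_mkcond /=; apply: eq_bigr => e _.
by rewrite !inE; case: (e \in C); case: (P e).
Qed.

Lemma degCE (g : mgraph) (C : {set edge g}) v :
  degC C v = \sum_(e in C) (((endpts e).1 == v) + ((endpts e).2 == v)).
Proof. by rewrite /degC !card_sum big_split. Qed.

Lemma sum_eq_in (T : finType) (Z : {set T}) x :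
  \sum_(v in Z) ((x == v) : nat) = (x \in Z).
Proof.
case: (boolP (x \in Z)) => xZ.
  rewrite (bigD1 x) //= eqxx big1 // => v /andP [_ /negbTE]; by rewrite eq_sym => ->.
by rewrite big1 // => v vZ; case: eqP => // exv; rewrite exv vZ in xZ.
Qed.

Lemma cycle_cross (g : mgraph) (C : {set edge g}) (Z : {set vert g}) :
  (forall v, degC C v = 0 \/ degC C v = 2) -> #|C :&: crossing Z| != 1.
Proof.
move=> hdeg.
have E1 : \sum_(v in Z) degC C v =
   \sum_(e in C) (((endpts e).1 \in Z) + ((endpts e).2 \in Z)).
  rewrite (eq_bigr _ (fun v _ => degCE C v)) exchange_big /=.
  by apply: eq_bigr => e _; rewrite big_split /= !sum_eq_in.
have E2 : \sum_(e in C) (((endpts e).1 \in Z) + ((endpts e).2 \in Z)) =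
   2 * \sum_(e in C) (((endpts e).1 \in Z) && ((endpts e).2 \in Z) : nat)
   + #|C :&: crossing Z|.
  have -> : C :&: crossing Z = [set e in C | e \in crossing Z].
    by apply/setP => e; rewrite !inE.
  rewrite card_sum big_distrr -big_split /=; apply: eq_bigr => e _.
  by rewrite inE; case: (_ \in Z); case: (_ \in Z).
have E3 : \sum_(v in Z) degC C v = 2 * \sum_(v in Z) (degC C v)./2.
  rewrite big_distrr; apply: eq_bigr => v _.
  by case: (hdeg v) => ->.
move: E1; rewrite E2 E3 => E; apply/eqP => h; rewrite h in E; lia.
Qed.

Lemma degC_U (g : mgraph) (C1 C2 : {set edge g}) v :
  [disjoint C1 & C2] -> degC (C1 :|: C2) v = degC C1 v + degC C2 v.
Proof. move=> hd; rewrite !degCE -bigU //; apply: eq_bigl => e; by rewrite !inE. Qed.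

Lemma degC_set1 (g : mgraph) (e : edge g) v :
  degC [set e] v = ((endpts e).1 == v) + ((endpts e).2 == v).
Proof. by rewrite degCE big_set1. Qed.

Lemma degC0 (g : mgraph) (C : {set edge g}) v :
  (forall e, e \in C -> ((endpts e).1 != v) && ((endpts e).2 != v)) -> degC C v = 0.
Proof.
move=> h; rewrite degCE big1 // => e /h /andP [/negbTE -> /negbTE ->]. done.
Qed.

Lemma degC_imset (g h : mgraph) (f : edge g -> edge h) (k : vert g -> vert h)
  (C : {set edge g}) v :
  injective k -> {in C &, injective f} ->
  (forall e, e \in C -> endpts (f e) = (k (endpts e).1, k (endpts e).2)) ->
  degC (f @: C) (k v) = degC C v.
Proof.
move=> hk hf he; rewrite !degCE big_imset //; apply: eq_bigr => e eC.
by rewrite he //= !(inj_eq hk).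
Qed.

Lemma notsetT (T : finType) (S : {set T}) : S != setT -> exists x, x \notin S.
Proof.
move=> hS; case: (pickP (fun x => x \notin S)) => [x hx | h]; first by exists x.
have hS' : S = setT.
  by apply/setP => x; rewrite inE; have := h x; rewrite /= => /negbFE.
by rewrite hS' eqxx in hS.
Qed.

Lemma transfer (g t : mgraph) (f : vert g -> vert t) (p : edge t -> edge g)
  (hpim : forall e, f (endpts e).1 != f (endpts e).2 -> exists x, p x = e)
  (hends : forall x, endpts x = (f (endpts (p x)).1, f (endpts (p x)).2))
  (S : {set vert t}) :
  crossing [set u | f u \in S] = p @: crossing S.
Proof.
apply/setP => e; rewrite !inE; apply/idP/imsetP.
- move=> h; have hne : f (endpts e).1 != f (endpts e).2.
    by apply: contraNneq h => ->.
  case: (hpim e hne) => x ex; exists x => //.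
  by rewrite inE hends /= ex.
- by case=> x; rewrite inE hends /= => hx ->.
Qed.

Lemma rep_of (g t : mgraph) (f : vert g -> vert t) (p : edge t -> edge g)
  (hc : cactus t) (hsurj : forall x, exists u, f u = x) (hinj : injective p)
  (hpim : forall e, f (endpts e).1 != f (endpts e).2 -> exists x, p x = e)
  (hends : forall x, endpts x = (f (endpts (p x)).1, f (endpts (p x)).2))
  (hcl : forall u v (X : {set vert g}), f u = f v -> u \in X -> v \notin X ->
           #|crossing X| != 2) :
  cactus_rep2 f.
Proof.
split=> //; split.
- move=> S S0 ST cS /=; split.
  + case/set0Pn: S0 => x xS; case: (hsurj x) => u fu.
    by apply/set0Pn; exists u; rewrite inE fu.
  + case: (notsetT ST) => x xS; case: (hsurj x) => u fu.
    apply/eqP => h; move: (in_setT u); rewrite -h inE fu.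
    by rewrite (negbTE xS).
  + by rewrite (transfer hpim hends) card_imset.
- move=> X X0 XT cX.
  have hX : X = [set u | f u \in f @: X].
    apply/setP => u; rewrite inE; apply/idP/imsetP.
      by move=> uX; exists u.
    case=> v vX fuv; apply/negPn/negP => uX.
    by have := hcl v u X (esym fuv) vX uX; rewrite cX.
  exists (f @: X); split.
  + case/set0Pn: X0 => u uX; apply/set0Pn; exists (f u); exact: imset_f.
  + apply/eqP => h; move: XT; rewrite hX h.
    have -> : [set u | f u \in [set: vert t]] = setT by apply/setP => u; rewrite !inE.
    by rewrite eqxx.
  + by move: cX; rewrite {1}hX (transfer hpim hends) card_imset.
  + exact: hX.
Qed.

Lemma degC_pos (g : mgraph) (C : {set edge g}) e v :
  e \in C -> ((endpts e).1 == v) || ((endpts e).2 == v) -> 0 < degC C v.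
Proof.
move=> eC he; rewrite degCE (bigD1 e) //=.
by case/orP: he => ->; rewrite ?addnA ?addn1.
Qed.

Lemma disjP (T : finType) (A B : {set T}) :
  (forall x, x \in A -> x \in B -> False) -> [disjoint A & B].
Proof.
move=> H; rewrite -setI_eq0; apply/eqP/setP => x; rewrite !inE.
by apply/negbTE/negP => /andP [h1 h2]; exact: H x h1 h2.
Qed.

Lemma cactus_red (T : mgraph) (a b : edge T) (r s ry sy : vert T) (D : {set edge T})
 (hcT : cactus T) (hab : a != b)
 (hea : (endpts a == (r, ry)) || (endpts a == (ry, r)))
 (heb : (endpts b == (s, sy)) || (endpts b == (sy, s)))
 (hs : s \in rcomp [set a; b] r) (hry : ry \notin rcomp [set a; b] r)
 (hsy : sy \notin rcomp [set a; b] r)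
 (hD : is_cycle D) (haD : a \in D) (hbD : b \in D) :
 cactus (reduce [set a; b] r s true).
Proof.
set F := [set a; b].
set TA := rcomp F r.
have hr : r \in TA := r_in_rcomp F r.
have aF : a \in F by rewrite !inE eqxx.
have bF : b \in F by rewrite !inE eqxx orbT.
have crossTA t : t \notin F -> ((endpts t).1 \in TA) = ((endpts t).2 \in TA).
  move=> tF; have := contra (subsetP (crossing_rcomp F r) t) tF.
  by rewrite inE negbK => /eqP.
set T1 := reduce F r s true.
have valK (w : vert T1) : val w \in TA := valP w.
have endsE (o : edge T1) : endpts o = rends o by [].
have hconn : connected T1.
  move=> u v; apply/cutP => Y uY cY.
  have cY' : forall o : edge T1, ((rends o).1 \in Y) = ((rends o).2 \in Y).
    move=> o; apply/eqP/negPn/negP => h.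
    by have := subsetP cY o; rewrite inE h in_set0 => /(_ isT).
  have memY x (h : x \in TA) : (x \in val @: Y) = (insubd (rbase F r) x \in Y).
    by rewrite -{1}(insubdK (rbase F r) h) mem_imset //; exact: val_inj.
  have cY2 : crossing (val @: Y) \subset F.
    apply/subsetP => t; rewrite inE => ht; apply/negPn/negP => tF.
    have hYTA x : x \in val @: Y -> x \in TA by case/imsetP => w _ ->.
    have h1 : (endpts t).1 \in TA.
      case: (boolP ((endpts t).1 \in val @: Y)) => h; first exact: hYTA.
      rewrite (negbTE h) in ht; rewrite (crossTA t tF); apply: hYTA; by move: ht; case: (_ \in val @: Y).
    have h2 : (endpts t).2 \in TA by rewrite -crossTA.
    have ht' : [&& t \notin F, (endpts t).1 \in rcomp F r & (endpts t).2 \in rcomp F r].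
      by rewrite tF h1 h2.
    pose o : edge T1 := @exist _ _ (Some (@exist _ _ t ht')) isT.
    have := cY' o; rewrite /= -!memY //; by move/eqP; rewrite (negbTE ht).
  have hc : connect (adj F) (val u) (val v).
    have hu := valK u; have hv := valK v; rewrite !inE in hu hv.
    by apply: connect_trans hv; rewrite connectC.
  have := (elimT (cutP _ _ _) hc) (val @: Y) (imset_f _ uY) cY2.
  by rewrite mem_imset //; exact: val_inj.
have hs' : s \in TA by [].
have hry' : ry \notin TA by [].
have hsy' : sy \notin TA by [].
case: hcT => _ hnl hcyT.
have ea : endpts a = (r, ry) \/ endpts a = (ry, r) by case/orP: hea => /eqP; [left|right].
have eb : endpts b = (s, sy) \/ endpts b = (sy, s) by case/orP: heb => /eqP; [left|right].
split => //.
  case=> [[t|] ho] /=.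
    rewrite /rends /=; case: t ho => t ht ho /=.
    case/and3P: (ht) => tF h1 h2.
    apply: contra (hnl t) => /eqP /(congr1 val).
    by rewrite !insubdK // => ->.
  rewrite /rends /=; move: ho; rewrite eqxx /= => rs.
  by apply: contra rs => /eqP /(congr1 val); rewrite insubdK //= => ->.
pose oldT (o : edge T1) : edge T := if val o is Some t then val t else a.
pose isNew (o : edge T1) := val o == None.
pose P' := [set t in D | ((endpts t).1 \notin TA) || ((endpts t).2 \notin TA)].
have hold o : ~~ isNew o -> [/\ endpts (oldT o) = (val (endpts o).1, val (endpts o).2),
    oldT o \notin F, (endpts (oldT o)).1 \in TA & (endpts (oldT o)).2 \in TA].
  case: o => [[[t ht]|] ho] //= _.
  case/and3P: (ht) => tF h1 h2.
  by rewrite /rends /= !insubdK // -surjective_pairing.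
have hnew o : isNew o -> [/\ r != s, val (endpts o).1 = r & val (endpts o).2 = s].
  case: o => [[t|] ho] //= _; move: ho; rewrite eqxx /= => rs.
  by rewrite /rends /= insubdK.
have holdinj : {in [pred o | ~~ isNew o] &, injective oldT}.
  move=> [[[t1 h1]|] ho1] [[[t2 h2]|] ho2] //= _ _; rewrite /oldT /= => e12.
  by apply: val_inj => /=; congr Some; apply: val_inj.
have newuniq o1 o2 : isNew o1 -> isNew o2 -> o1 = o2.
  by move=> /eqP h1 /eqP h2; apply: val_inj; rewrite h1 h2.
have aP : a \in P'.
  by rewrite inE haD; case: ea => -> /=; rewrite hry' ?orbT.
have bP : b \in P'.
  by rewrite inE hbD; case: eb => -> /=; rewrite hsy' ?orbT.
have P'out t : t \in P' -> t \notin F ->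
    ((endpts t).1 \notin TA) && ((endpts t).2 \notin TA).
  rewrite inE => /andP [_ h] tF; move: h; rewrite (crossTA t tF).
  by rewrite orbb => ->.
have notP'in t : t \in D -> t \notin P' ->
    ((endpts t).1 \in TA) && ((endpts t).2 \in TA).
  by move=> tD; rewrite inE tD /= negb_or !negbK.
have inF t : (t \in F) = (t == a) || (t == b) by rewrite !inE.
have neqTA x y : x \in TA -> y \notin TA -> (y == x) = false.
  by move=> hx hy; apply/negbTE; apply: contraNneq hy => ->.
have degP'in x : x \in TA -> degC P' x = (r == x) + (s == x).
  move=> xT.
  have -> : P' = [set a] :|: ([set b] :|: (P' :\: F)).
    apply/setP => t; rewrite !in_setU !in_set1 in_setD inF.
    case: (eqVneq t a) => [->|ta] /=; first by rewrite aP.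
    by case: (eqVneq t b) => [->|tb] /=; first by rewrite bP.
  rewrite degC_U; last by rewrite disjoints1 !in_setU in_set1 in_setD aF (negbTE hab).
  rewrite degC_U; last by rewrite disjoints1 in_setD bF.
  rewrite (@degC0 _ (P' :\: F)); last first.
    move=> t; rewrite in_setD => /andP [tF tP].
    by case/andP: (P'out t tP tF) => h1 h2; rewrite !(neqTA x).
  rewrite !degC_set1.
  by case: ea => ->; case: eb => -> /=; rewrite (neqTA x ry xT hry') (neqTA x sy xT hsy');
     case: (r == x); case: (s == x).
have degP'out x : x \notin TA -> degC P' x = degC D x.
  move=> xT.
  have -> : D = P' :|: (D :\: P').
    apply/setP => t; rewrite in_setU in_setD.
    by case: (boolP (t \in P')) => h /=; [rewrite inE in h; case/andP: h|].
  rewrite degC_U; last by rewrite -setI_eq0 setIDA setIC -setIDA setDv setI0.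
  rewrite (@degC0 _ (D :\: P')) ?addn0 //.
  move=> t; rewrite in_setD => /andP [tP tD].
  case/andP: (notP'in t tD tP) => h1 h2; apply/andP; split; apply/eqP => ex.
    by rewrite -ex h1 in xT.
  by rewrite -ex h2 in xT.
pose C0 (C : {set edge T1}) := [set o in C | ~~ isNew o].
pose N (C : {set edge T1}) := [exists o in C, isNew o].
pose L (C : {set edge T1}) := oldT @: C0 C :|: (if N C then P' else set0).
have disjL C : [disjoint oldT @: C0 C & (if N C then P' else set0)].
  apply: disjP => t /imsetP [o]; rewrite inE => /andP [oC on] ->.
  case: (N C); last by rewrite inE.
  case: (hold o on) => _ _ h1 h2; rewrite inE => /andP [_].
  by rewrite h1 h2.
have degset0 (g : mgraph) (x : vert g) : degC set0 x = 0 by apply: degC0 => e; rewrite inE.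
have degL_in C w : degC (L C) (val w) = degC C w.
  rewrite degC_U // degC_imset //; last first.
  - by move=> o; rewrite inE => /andP [_ on]; case: (hold o on).
  - by move=> o1 o2; rewrite !inE => /andP [_ h1] /andP [_ h2]; apply: holdinj; rewrite inE.
  - exact: val_inj.
  have -> : degC C w = degC (C0 C) w + degC [set o in C | isNew o] w.
    rewrite -degC_U; last first.
      by apply: disjP => o; rewrite !inE => /andP [_ /negbTE ->] /andP [].
    by congr degC; apply/setP => o; rewrite !inE; case: (o \in C); case: (isNew o).
  congr addn.
  rewrite /N; case: existsP => [[n /andP [nC nn]]|hN].
    have -> : [set o in C | isNew o] = [set n].
      apply/setP => o; rewrite !inE; apply/andP/eqP => [[_ on]|->//].
      exact: newuniq.
    case: (hnew n nn) => _ h1 h2.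
    by rewrite degC_set1 degP'in // -!val_eqE h1 h2.
  have -> : [set o in C | isNew o] = set0.
    by apply/setP => o; rewrite !inE; apply/negP => h; apply: hN; exists o.
  by rewrite !degset0.
have degL_out C x : x \notin TA -> degC (L C) x = if N C then degC D x else 0.
  move=> xT; rewrite degC_U // (@degC0 _ (oldT @: C0 C)); last first.
    move=> t /imsetP [o]; rewrite inE => /andP [_ on] ->.
    case: (hold o on) => _ _ h1 h2; apply/andP; split; apply/eqP => ex.
      by rewrite -ex h1 in xT.
    by rewrite -ex h2 in xT.
  by case: (N C); rewrite ?degP'out ?degset0.
have memL_old (C : {set edge T1}) o : ~~ isNew o -> (oldT o \in L C) = (o \in C).
  move=> on; rewrite in_setU; apply/idP/idP.
    case/orP => [/imsetP [o' ] | ].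
      rewrite inE => /andP [o'C o'n] e; suff -> : o = o' by [].
      by apply: holdinj; rewrite ?inE.
    case: (N C); last by rewrite inE.
    rewrite inE => /andP [_]; case: (hold o on) => _ _ -> ->; done.
  by move=> oC; rewrite imset_f // inE oC.
have memL_a (C : {set edge T1}) : (a \in L C) = N C.
  rewrite in_setU; case: (N C); rewrite ?aP ?orbT ?inE ?orbF //.
  apply/imsetP => -[o]; rewrite inE => /andP [_ on] e.
  by case: (hold o on) => _; rewrite -e aF.
have memL_new (C : {set edge T1}) n : isNew n -> (n \in C) = N C.
  move=> nn; apply/idP/existsP => [nC | [o /andP [oC on]]]; first by exists n; rewrite nC.
  by rewrite (newuniq n o nn on).
case: hD => _ hDdeg hDconn.
have degDa : 0 < degC D r /\ 0 < degC D ry.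
  by split; apply: (degC_pos haD); case: ea => -> /=; rewrite eqxx ?orbT.
have degDb : 0 < degC D s /\ 0 < degC D sy.
  by split; apply: (degC_pos hbD); case: eb => -> /=; rewrite eqxx ?orbT.
have cycL (C : {set edge T1}) : is_cycle C -> is_cycle (L C).
  case=> Cne hdeg hconnC; split.
  - case/set0Pn: Cne => o oC; apply/set0Pn; case: (boolP (isNew o)) => on.
      by exists a; rewrite memL_a; apply/existsP; exists o; rewrite oC.
    by exists (oldT o); rewrite memL_old.
  - move=> x; case: (boolP (x \in TA)) => xT.
      by have := degL_in C (exist _ x xT); rewrite /= => ->.
    by rewrite degL_out //; case: (N C); [apply: hDdeg | left].
  move=> u v hu hv; apply/cutP => Y uY cY.
  have cYL t : t \in L C -> ((endpts t).1 \in Y) = ((endpts t).2 \in Y).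
    move=> tL; apply/eqP/negPn/negP => h.
    by have := subsetP cY t; rewrite inE h => /(_ isT); rewrite inE tL.
  pose Y1 := [set w : vert T1 | val w \in Y].
  have Cclosed : (N C -> (r \in Y) = (s \in Y)) -> forall w1 w2, w1 \in Y1 ->
      0 < degC C w1 -> 0 < degC C w2 -> w2 \in Y1.
    move=> hrs w1 w2 w1Y d1 d2; move: (hconnC w1 w2 d1 d2) => /cutP; apply => //.
    apply/subsetP => o; rewrite !inE => ho; apply/negP => oC.
    case: (boolP (isNew o)) => on.
      case: (hnew o on) => _ h1 h2; move: ho; rewrite h1 h2 hrs ?eqxx //.
      by apply/existsP; exists o; rewrite oC.
    have := cYL (oldT o); rewrite memL_old // oC; case: (hold o on) => -> _ _ _ /=.
    by move/(_ isT) => e; rewrite e eqxx in ho.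
  pose Y2 := [set x | if x \in TA then r \in Y else x \in Y].
  have inY2 x : (x \in Y2) = if x \in TA then r \in Y else x \in Y by rewrite /Y2 in_set.
  have ra : N C -> (r \in Y) = (ry \in Y).
    move=> hN; have := cYL a; rewrite memL_a hN => /(_ isT).
    by case: ea => ->.
  have sb : N C -> (s \in Y) = (sy \in Y).
    move=> hN; have : b \in L C by rewrite in_setU hN bP orbT.
    by move/cYL; case: eb => ->.
  have Dclosed : N C -> (r \in Y) = (s \in Y) -> forall x1 x2, x1 \in Y2 ->
      0 < degC D x1 -> 0 < degC D x2 -> x2 \in Y2.
    move=> hN hrs x1 x2 x1Y d1 d2; move: (hDconn x1 x2 d1 d2) => /cutP; apply => //.
    apply/subsetP => t; rewrite in_setC [t \in crossing _]in_set !inY2 => ht; apply/negP => tD.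
    case: (boolP (t \in P')) => tP; last first.
      by case/andP: (notP'in t tD tP) => h1 h2; rewrite h1 h2 eqxx in ht.
    case: (boolP (t \in F)) => tF; last first.
      case/andP: (P'out t tP tF) => h1 h2; rewrite (negbTE h1) (negbTE h2) in ht.
      have : t \in L C by rewrite in_setU hN tP orbT.
      by move/cYL => e; rewrite e eqxx in ht.
    move: tF; rewrite inF => /orP [] /eqP et; subst t.
      by move: ht; case: ea => -> /=; rewrite hr (negbTE hry') -(ra hN) eqxx.
    by move: ht; case: eb => -> /=; rewrite hs' (negbTE hsy') -(sb hN) hrs eqxx.
  have rs : N C -> (r \in Y) = (s \in Y).
    move=> hN; rewrite (ra hN) (sb hN); apply/eqP/negPn/negP => hne.
    pose Z := [set x | (x \in TA) || (x \in Y)].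
    have inZ x : (x \in Z) = (x \in TA) || (x \in Y) by rewrite /Z in_set.
    have gen t : t \in D -> t \notin F -> t \notin crossing Z.
      move=> tD tF; rewrite [t \in crossing _]in_set !inZ negbK.
      case: (boolP (t \in P')) => tP.
        case/andP: (P'out t tP tF) => h1 h2; rewrite (negbTE h1) (negbTE h2) /=.
        by apply/eqP; apply: cYL; rewrite in_setU hN tP orbT.
      by case/andP: (notP'in t tD tP) => -> ->.
    have ca : (a \in crossing Z) = (ry \notin Y).
      rewrite [a \in crossing _]in_set !inZ.
      by case: ea => -> /=; rewrite hr (negbTE hry') /=; case: (ry \in Y).
    have cb : (b \in crossing Z) = (sy \notin Y).
      rewrite [b \in crossing _]in_set !inZ.
      by case: eb => -> /=; rewrite hs' (negbTE hsy') /=; case: (sy \in Y).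
    have := cycle_cross Z hDdeg.
    move: hne; case: (boolP (ry \in Y)) => hyY; case: (boolP (sy \in Y)) => hsY //= _.
      have -> : D :&: crossing Z = [set b]; last by rewrite cards1.
      apply/setP => t; rewrite in_setI in_set1; apply/andP/eqP => [[tD tc]| ->]; last first.
        by rewrite hbD cb hsY.
      case: (boolP (t \in F)) => tF; last by rewrite (negbTE (gen t tD tF)) in tc.
      by move: tF; rewrite inF => /orP [/eqP et|/eqP //]; subst t; rewrite ca hyY in tc.
    have -> : D :&: crossing Z = [set a]; last by rewrite cards1.
    apply/setP => t; rewrite in_setI in_set1; apply/andP/eqP => [[tD tc]| ->]; last first.
      by rewrite haD ca hyY.
    case: (boolP (t \in F)) => tF; last by rewrite (negbTE (gen t tD tF)) in tc.
    by move: tF; rewrite inF => /orP [/eqP //|/eqP et]; subst t; rewrite cb hsY in tc.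
  have degin x (xT : x \in TA) : degC (L C) x = degC C (exist _ x xT).
    by have := degL_in C (exist _ x xT).
  case: (boolP (N C)) => hN.
    have hrs := rs hN.
    case/existsP: (hN) => n /andP [nC nn].
    have wr_deg : 0 < degC C (exist _ r hr).
      apply: (degC_pos nC); case: (hnew n nn) => _ h1 _.
      by rewrite -val_eqE h1 eqxx.
    have rY : r \in Y.
      case: (boolP (u \in TA)) => uT.
        rewrite degin in hu.
        have : (exist _ r hr : vert T1) \in Y1.
          by apply: (Cclosed (fun _ => hrs) (exist _ u uT)) => //; rewrite inE.
        by rewrite inE.
      rewrite degL_out // hN in hu.
      have : ry \in Y2.
        by apply: (Dclosed hN hrs u) => //; [rewrite inY2 (negbTE uT) | case: degDa].
      by rewrite inY2 (negbTE hry') (ra hN).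
    case: (boolP (v \in TA)) => vT.
      rewrite degin in hv.
      have : (exist _ v vT : vert T1) \in Y1.
        by apply: (Cclosed (fun _ => hrs) (exist _ r hr)) => //; rewrite inE.
      by rewrite inE.
    rewrite degL_out // hN in hv.
    have : v \in Y2.
      by apply: (Dclosed hN hrs r) => //; [rewrite inY2 hr | case: degDa].
    by rewrite inY2 (negbTE vT).
  have uT : u \in TA.
    by apply/negPn/negP => uT; rewrite degL_out // (negbTE hN) in hu.
  have vT : v \in TA.
    by apply/negPn/negP => vT; rewrite degL_out // (negbTE hN) in hv.
  rewrite degin in hu; rewrite degin in hv.
  have : (exist _ v vT : vert T1) \in Y1.
    have hno : N C -> (r \in Y) = (s \in Y) by move=> h; rewrite h in hN.
    by apply: (Cclosed hno (exist _ u uT)) => //; rewrite inE.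
  by rewrite inE.
move=> e C1 C2 hC1 hC2 eC1 eC2.
have LL : L C1 = L C2.
  apply: (hcyT (if isNew e then a else oldT e)) (cycL _ hC1) (cycL _ hC2) _ _;
    case: (boolP (isNew e)) => en; rewrite ?memL_a ?memL_old // -?(memL_new _ e en) //.
apply/setP => o; case: (boolP (isNew o)) => on.
  by rewrite (memL_new C1 o on) (memL_new C2 o on) -!memL_a LL.
by rewrite -!(memL_old _ o on) LL.
Qed.
Lemma half (G T : mgraph) (phi : vert G -> vert T) (psi : edge T -> edge G)
  (hphi_surj : forall t : vert T, exists u, phi u = t)
  (hphi : forall u v, phi u = phi v -> lambda_ge 3 u v)
  (hpsi_inj : injective psi)
  (hpsi_im : forall e, phi (endpts e).1 != phi (endpts e).2 -> exists t, psi t = e)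
  (hT_ends : forall t, endpts t = (phi (endpts (psi t)).1, phi (endpts (psi t)).2))
  (hcT : cactus T)
  (e1 e2 : edge G) (x1 y1 x2 y2 : vert G) (a b : edge T)
  (hD : exists D, [/\ is_cycle D, a \in D & b \in D])
  (hne : e1 != e2)
  (he1 : (endpts e1 == (x1, y1)) || (endpts e1 == (y1, x1)))
  (he2 : (endpts e2 == (x2, y2)) || (endpts e2 == (y2, x2)))
  (hx : connect (adj [set e1; e2]) x1 x2)
  (hy : connect (adj [set e1; e2]) y1 y2)
  (hxy : ~~ connect (adj [set e1; e2]) x1 y1)
  (ha : psi a = e1) (hb : psi b = e2) :
  exists phi1 : vert (reduce [set e1; e2] x1 x2 false) ->
                vert (reduce [set a; b] (phi x1) (phi x2) true),
     (forall v, val (phi1 v) = phi (val v)) /\ cactus_rep2 phi1.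
Proof.
set F := [set e1; e2].
set A := rcomp F x1.
have x1A : x1 \in A := r_in_rcomp F x1.
have x2A : x2 \in A by rewrite inE.
have y1A : y1 \notin A by rewrite inE.
have y2A : y2 \notin A.
  rewrite inE; apply: contra hxy => h.
  by apply: connect_trans h _; rewrite connectC.
have inF e : (e \in F) = (e == e1) || (e == e2) by rewrite !inE.
have crossA e : e \notin F -> ((endpts e).1 \in A) = ((endpts e).2 \in A).
  move=> eF; have := contra (subsetP (crossing_rcomp F x1) e) eF.
  by rewrite inE negbK => /eqP.
have cardF : #|F| = 2 by rewrite cards2 hne.
have cA : #|crossing A| <= 2.
  by rewrite -cardF; apply: subset_leq_card; apply: crossing_rcomp.
have classA u v : phi u = phi v -> (u \in A) = (v \in A).
  move=> huv; apply/idP/idP => h; apply/negPn/negP => h'.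
    by have := hphi _ _ huv A h h'; rewrite leqNgt ltnS cA.
  by have := hphi _ _ (esym huv) A h h'; rewrite leqNgt ltnS cA.
have memphiA x : (phi x \in phi @: A) = (x \in A).
  apply/imsetP/idP => [[w wA ew] | xA]; last by exists x.
  by rewrite (classA _ _ ew).
set Fab := [set a; b].
set TA := rcomp Fab (phi x1).
have psiFab : psi @: Fab = F by rewrite imsetU !imset_set1 ha hb.
have memTA x : (phi x \in TA) = (x \in A).
  apply/idP/idP => h.
    rewrite -memphiA; move: h; rewrite inE => /cutP; apply; first exact: imset_f.
    apply/subsetP => t; rewrite inE hT_ends /= !memphiA => ht.
    have : psi t \in F by apply/negPn/negP => tF; rewrite crossA // eqxx in ht.
    rewrite inF !inE -ha -hb !(inj_eq hpsi_inj); done.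
  rewrite inE; apply/cutP => Y Y1 cY.
  have h' : connect (adj F) x1 x by rewrite inE in h.
  have := (elimT (cutP _ _ _) h') [set w | phi w \in Y]; rewrite !inE; apply => //.
  rewrite (transfer hpsi_im hT_ends) -psiFab; exact: imsetS.
have hea : (endpts a == (phi x1, phi y1)) || (endpts a == (phi y1, phi x1)).
  by case/orP: he1 => /eqP e; rewrite hT_ends ha e eqxx ?orbT.
have heb : (endpts b == (phi x2, phi y2)) || (endpts b == (phi y2, phi x2)).
  by case/orP: he2 => /eqP e; rewrite hT_ends hb e eqxx ?orbT.
have hab : a != b by apply: contraNneq hne => eab; rewrite -ha -hb eab.
case: hD => D [hDc haD hbD].
have hcT1 : cactus (reduce Fab (phi x1) (phi x2) true).
  apply: (cactus_red hcT hab hea heb _ _ _ hDc haD hbD).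
  - by rewrite memTA.
  - by rewrite memTA.
  - by rewrite memTA.
set G1 := reduce F x1 x2 false.
set T1 := reduce Fab (phi x1) (phi x2) true.
pose phi1 (v : vert G1) : vert T1 := insubd (rbase Fab (phi x1)) (phi (val v)).
have phi1E v : val (phi1 v) = phi (val v).
  by rewrite insubdK // memTA; exact: (valP v).
exists phi1; split => //.
pose psi1 (o : edge T1) : edge G1 :=
  exist _ (obind (fun t => insub (psi (val t))) (val o)) isT.
have hpsiold (t : old_edge Fab (phi x1)) :
    [&& psi (val t) \notin F, (endpts (psi (val t))).1 \in rcomp F x1
      & (endpts (psi (val t))).2 \in rcomp F x1].
  case: t => t /= /and3P [tF h1 h2].
  rewrite hT_ends /= in h1 h2; rewrite -(memTA (endpts (psi t)).1) -(memTA (endpts (psi t)).2).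
  by rewrite -/TA in h1 h2; rewrite h1 h2 -psiFab mem_imset // tF.
have psi1S (o : edge T1) t : val o = Some t ->
    val (psi1 o) = Some (exist _ (psi (val t)) (hpsiold t)).
  by move=> ho; rewrite /psi1 /= ho /=; exact: insubT.
have psi1N (o : edge T1) : val o = None -> val (psi1 o) = None.
  by move=> ho; rewrite /psi1 /= ho.

have insA w (h : w \in A) : val (insubd (rbase F x1) w) = w by rewrite insubdK.
have insTA w (h : w \in TA) : val (insubd (rbase Fab (phi x1)) w) = w by rewrite insubdK.
apply: (@rep_of G1 T1 phi1 psi1 hcT1).
- move=> w; case: (hphi_surj (val w)) => u hu.
  have uA : u \in A by rewrite -memTA hu; exact: (valP w).
  by exists (exist _ u uA); apply: val_inj; rewrite phi1E.
- move=> o1 o2 e; apply: val_inj; have := congr1 val e.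
  case ho1: (val o1) => [t1|]; case ho2: (val o2) => [t2|];
    rewrite ?(psi1S _ _ ho1) ?(psi1S _ _ ho2) ?(psi1N _ ho1) ?(psi1N _ ho2) //.
  by case=> /hpsi_inj /val_inj ->.
- case=> [[[e he]|] ho] hne'.
    case/and3P: (he) => eF h1 h2.
    have hne2 : phi (endpts e).1 != phi (endpts e).2.
      apply: contra hne' => /eqP h; apply/eqP; apply: val_inj.
      by rewrite !phi1E /= /rends /= !insA.
    case: (hpsi_im _ hne2) => t ht.
    have htt : [&& t \notin Fab, (endpts t).1 \in rcomp Fab (phi x1)
                 & (endpts t).2 \in rcomp Fab (phi x1)].
      rewrite -/TA hT_ends /= ht !memTA h1 h2 !andbT.
      by apply: contra eF; rewrite -psiFab -ht; apply: imset_f.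
    pose o : edge T1 := exist _ (Some (exist _ t htt)) isT.
    exists o; apply: val_inj.
    rewrite (psi1S o (exist _ t htt) erefl) /=; congr Some; apply: val_inj => /=.
    exact: ht.
  have hne2 : phi x1 != phi x2.
    apply: contra hne' => /eqP h; apply/eqP; apply: val_inj.
    by rewrite !phi1E /= /rends /= insA.
  have hp : ~~ [&& true, @None (old_edge Fab (phi x1)) == None & phi x1 == phi x2].
    by rewrite /= (negbTE hne2).
  exists (exist _ None hp : edge T1); apply: val_inj.
  by rewrite psi1N.
- case=> [[t|] hq].
    have e := psi1S (exist _ (Some t) hq) t erefl.
    have := hpsiold t; case/and3P => _ h1 h2.
    case: t hq e h1 h2 => t ht hq e h1 h2; case/and3P: (ht) => _ g1 g2.
    rewrite /= /rends e /=; congr pair; apply: val_inj;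
      by rewrite phi1E !insA // insTA // hT_ends.
  have e := psi1N (exist _ None hq) erefl.
  rewrite /= /rends /=; congr pair; apply: val_inj;
    by rewrite phi1E ?insA ?insTA // memTA.
move=> u v X huv uX vX.
have hl := hphi (val u) (val v) (etrans (esym (phi1E u)) (etrans (congr1 val huv) (phi1E v))).
pose x1' := rbase F x1.
pose X' := [set w : vert G | if w \in A then insubd x1' w \in X else x1' \in X].
have inX' w : (w \in X') = if w \in A then insubd x1' w \in X else x1' \in X.
  by rewrite /X' in_set.
pose f (o : edge G1) : edge G := if val o is Some e then val e else e2.
have e2F : e2 \in F by rewrite inF eqxx orbT.
have finj : injective f.
  move=> [[[e he]|] ho1] [[[e' he']|] ho2]; rewrite /f /= => eq; apply: val_inj => //=.
  - by congr Some; apply: val_inj.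
  - by subst e; case/and3P: (he); rewrite e2F.
  - by subst e'; case/and3P: (he'); rewrite e2F.
have insK (w : vert G1) : insubd x1' (val w) = w := valKd x1' w.
have x1'' : insubd x1' x1 = x1' by apply: val_inj; rewrite insA.
pose n : edge G1 := exist _ None isT.
have cross : crossing X' = f @: crossing X.
  apply/setP => e; rewrite [e \in crossing X']in_set !inX'; apply/idP/imsetP.
  - move=> he; case: (boolP (e \in F)) => eF.
      move: eF; rewrite inF => /orP [/eqP ee|/eqP ee]; subst e.
        by move: he; case/orP: he1 => /eqP ee; rewrite ee /= x1A (negbTE y1A) x1'' eqxx.
      exists n => //; rewrite in_set /= /rends /=.
      by move: he; case/orP: he2 => /eqP ee; rewrite ee /= x2A (negbTE y2A) // eq_sym.
    have := crossA e eF; case: (boolP ((endpts e).1 \in A)) => h1 /esym h2.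
      have he' : [&& e \notin F, (endpts e).1 \in rcomp F x1 & (endpts e).2 \in rcomp F x1].
        by rewrite eF -/A h1 h2.
      pose o : edge G1 := exist _ (Some (exist _ e he')) isT.
      exists o => //; rewrite in_set /= /rends /=.
      by rewrite h1 h2 in he.
    by rewrite h2 (negbTE h1) eqxx in he.
  - case=> o ho ->; case: o ho => [[[e' he']|] hq] ho.
      rewrite /f /=; rewrite in_set /= /rends /= in ho.
      by case/and3P: (he') => _ g1 g2; rewrite -/A in g1 g2; rewrite g1 g2.
    rewrite /f /=; rewrite in_set /= /rends /= in ho.
    by case/orP: he2 => /eqP ee; rewrite ee /= x2A (negbTE y2A) // eq_sym.
have := hl X'; rewrite !inX' (valP u) (valP v) !insK uX (negbTE vX).
rewrite cross card_imset // => /(_ isT isT).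
by case: #|crossing X| => [|[|[|]]].
Qed.

Theorem lemma5
  (G T : mgraph) (phi : vert G -> vert T) (psi : edge T -> edge G)
  (* G: connected bridgeless cubic with at least one 2-edge-cut *)
  (hconn : connected G) (hbl : bridgeless G) (hcub : cubic G)
  (h2 : exists F : {set edge G}, two_edge_cut F)
  (* (T, phi): contraction of the 3-edge-connected components of G *)
  (hphi_surj : forall t : vert T, exists u, phi u = t)
  (hphi : forall u v : vert G, phi u = phi v <-> lambda_ge 3 u v)
  (hpsi_inj : injective psi)
  (hpsi_im : forall e : edge G,
      phi (endpts e).1 != phi (endpts e).2 <-> exists t, psi t = e)
  (hT_ends : forall t : edge T,
      endpts t = (phi (endpts (psi t)).1, phi (endpts (psi t)).2))
  (hcyc : forall t1 t2 : edge T, t1 != t2 ->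
      two_edge_cut [set psi t1; psi t2] <->
      exists C : {set edge T}, [/\ is_cycle C, t1 \in C & t2 \in C])
  (hrep : cactus_rep2 phi)
  (* the 2-edge-cut {e1, e2} of G and the corresponding {a, b} of T *)
  (e1 e2 : edge G) (x1 y1 x2 y2 : vert G) (a b : edge T)
  (hcut : two_edge_cut [set e1; e2])
  (he1 : (endpts e1 == (x1, y1)) || (endpts e1 == (y1, x1)))
  (he2 : (endpts e2 == (x2, y2)) || (endpts e2 == (y2, x2)))
  (hx : connect (adj [set e1; e2]) x1 x2)
  (hy : connect (adj [set e1; e2]) y1 y2)
  (hxy : ~~ connect (adj [set e1; e2]) x1 y1)
  (ha : psi a = e1) (hb : psi b = e2) :
  let G1 := reduce [set e1; e2] x1 x2 false in
  let G2 := reduce [set e1; e2] y1 y2 false in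
  let T1 := reduce [set a; b] (phi x1) (phi x2) true in
  let T2 := reduce [set a; b] (phi y1) (phi y2) true in
  (exists phi1 : vert G1 -> vert T1,
     (forall v : vert G1, val (phi1 v) = phi (val v)) /\ cactus_rep2 phi1) /\
  (exists phi2 : vert G2 -> vert T2,
     (forall v : vert G2, val (phi2 v) = phi (val v)) /\ cactus_rep2 phi2).
Proof.
move=> G1 G2 T1 T2.
case: hrep => hcT _.
have hne : e1 != e2.
  by case: hcut => _ h _; move: h; rewrite cards2; case: (e1 != e2).
have hab : a != b by apply: contraNneq hne => eab; rewrite -ha -hb eab.
have hD : exists D, [/\ is_cycle D, a \in D & b \in D].
  by apply/(hcyc a b hab); rewrite ha hb.
have hphi' u v : phi u = phi v -> lambda_ge 3 u v by move/(hphi u v).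
have hpsi' e : phi (endpts e).1 != phi (endpts e).2 -> exists t, psi t = e.
  by move/(hpsi_im e).
split.
  exact: (half hphi_surj hphi' hpsi_inj hpsi' hT_ends hcT hD hne he1 he2 hx hy hxy ha hb).
have he1' : (endpts e1 == (y1, x1)) || (endpts e1 == (x1, y1)) by rewrite orbC.
have he2' : (endpts e2 == (y2, x2)) || (endpts e2 == (x2, y2)) by rewrite orbC.
have hyx : ~~ connect (adj [set e1; e2]) y1 x1 by rewrite connectC.
exact: (half hphi_surj hphi' hpsi_inj hpsi' hT_ends hcT hD hne he1' he2' hy hx hyx ha hb).
Qed.
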